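(* Let $\mathbf{S}=\langle S;\to,\neg,{}^+,{}^-,1\rangle$ be a strong quasi-Wajsberg* algebra. For $x,y\in S$ define $0:=x\to x$, $x\oplus y:=\neg x\to y$ and $-x:=\neg x$. Then $g(\mathbf{S})=\langle S;\oplus,-,{}^+,{}^-,0,1\rangle$ is a strong quasi-MV* algebra (with $x\vee y:=(x^{+}\oplus(-x^{+}\oplus y^{+})^{+})\oplus(x^{-}\oplus(-x^{-}\oplus y^{-})^{+})$).
   Context: A quasi-Wajsberg* algebra is an algebra $\langle W;\to,\neg,{}^+,{}^-,1\rangle$ of type $\langle 2,1,1,1,0\rangle$ (${}^+,{}^-$ bind more tightly than $\neg$, which binds more tightly than $\to$) such that for all $x,y,z$: (1) $x\to y=\neg y\to\neg x$; (2) $(x\to 1)\to((y\to 1)\to z)=(y\to 1)\to((x\to 1)\to z)$; (3) $(1\to x)\to 1=1$; (4) $(z\to z)\to(x\to y)=x\to y$; (5) $(1\to 1)\to x^{+}=((1\to 1)\to x)^{+}=(x\to 1)\to 1$ and $(1\to 1)\to x^{-}=((1\to 1)\to x)^{-}=(x\to\neg 1)\to\neg 1$; (6) $x\to y=(y^{+}\to x^{-})\to(x^{+}\to y^{-})$; (7) $\neg(x\to y)=y\to x$; (8) $\neg\neg x=x$; (9) $(x\to(\neg x\to y))^{+}=x^{+}\to(\neg x^{+}\to y^{+})$; (10) $x\vee y=y\vee x$; (11) $x\vee(y\vee z)=(x\vee y)\vee z$; (12) $x\to(y\vee z)=(x\to y)\vee(x\to z)$; where $x\vee y:=((x^{+}\to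 y^{+})^{+}\to(\neg x)^{-})\to((y^{-}\to x^{-})^{-}\to x^{-})$. In a quasi-Wajsberg* algebra $x\to x$ does not depend on $x$. A strong quasi-Wajsberg* algebra is a quasi-Wajsberg* algebra satisfying $x^+=(1\to 1)\to x^+$ and $x^-=(1\to 1)\to x^-$. A quasi-MV* algebra is an algebra $\langle A;\oplus,-,{}^{+},{}^{-},0,1\rangle$ of type $\langle 2,1,1,1,0,0\rangle$ ($-1$ denotes $-(1)$) such that for all $x,y,z$: $x\oplus y=y\oplus x$; $(1\oplus x)\oplus(y\oplus(1\oplus z))=((1\oplus x)\oplus y)\oplus(1\oplus z)$; $(x\oplus 1)\oplus 1=1$; $(x\oplus y)\oplus 0=x\oplus y$; $x^{+}\oplus 0=(x\oplus 0)^{+}=1\oplus(-1\oplus x)$ and $x^{-}\oplus 0=(x\oplus 0)^{-}=-1\oplus(1\oplus x)$; $x\oplus y=(x^{+}\oplus y^{+})\oplus(x^{-}\oplus y^{-})$; $0=-0$; $x\oplus(-x)=0$; $-(x\oplus y)=(-x)\oplus(-y)$; $-(-x)=x$; $(-x\oplus(x\oplus y))^{+}=-x^{+}\oplus(x^{+}\oplus y^{+})$; $x\vee y=y\vee x$; $x\vee(y\vee z)=(x\vee y)\vee z$; $x\oplus(y\vee z)=(x\oplus y)\vee(x\oplus z)$, with $\vee$ as in the claim. A strong quasi-MV* algebra is a quasi-MV* algebra satisfying $x^+=x^+\oplus 0$ and $x^-=x^-\oplus 0$. *)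

(* Defs.v *)
Definition qw_join {W : Type} (imp : W -> W -> W) (neg : W -> W)
  (pl mi : W -> W) (x y : W) : W :=
  imp (imp (pl (imp (pl x) (pl y))) (mi (neg x)))
      (imp (mi (imp (mi y) (mi x))) (mi x)).

Definition quasi_wajsberg_star {W : Type} (imp : W -> W -> W) (neg : W -> W)
  (pl mi : W -> W) (one : W) : Prop :=
  let join := qw_join imp neg pl mi in
  (forall x y, imp x y = imp (neg y) (neg x)) /\
  (forall x y z, imp (imp x one) (imp (imp y one) z)
                 = imp (imp y one) (imp (imp x one) z)) /\
  (forall x, imp (imp one x) one = one) /\
  (forall x y z, imp (imp z z) (imp x y) = imp x y) /\
  (forall x, imp (imp one one) (pl x) = pl (imp (imp one one) x) /\
             pl (imp (imp one one) x) = imp (imp x one) one) /\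
  (forall x, imp (imp one one) (mi x) = mi (imp (imp one one) x) /\
             mi (imp (imp one one) x) = imp (imp x (neg one)) (neg one)) /\
  (forall x y, imp x y = imp (imp (pl y) (mi x)) (imp (pl x) (mi y))) /\
  (forall x y, neg (imp x y) = imp y x) /\
  (forall x, neg (neg x) = x) /\
  (forall x y, pl (imp x (imp (neg x) y)) = imp (pl x) (imp (neg (pl x)) (pl y))) /\
  (forall x y, join x y = join y x) /\
  (forall x y z, join x (join y z) = join (join x y) z) /\
  (forall x y z, imp x (join y z) = join (imp x y) (imp x z)).

Definition strong_quasi_wajsberg_star {W : Type} (imp : W -> W -> W) (neg : W -> W)
  (pl mi : W -> W) (one : W) : Prop :=
  quasi_wajsberg_star imp neg pl mi one /\
  (forall x, pl x = imp (imp one one) (pl x)) /\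
  (forall x, mi x = imp (imp one one) (mi x)).

Definition qmv_join {A : Type} (oplus : A -> A -> A) (opp : A -> A)
  (pl mi : A -> A) (x y : A) : A :=
  oplus (oplus (pl x) (pl (oplus (opp (pl x)) (pl y))))
        (oplus (mi x) (pl (oplus (opp (mi x)) (mi y)))).

Definition quasi_MV_star {A : Type} (oplus : A -> A -> A) (opp : A -> A)
  (pl mi : A -> A) (zero one : A) : Prop :=
  let join := qmv_join oplus opp pl mi in
  (forall x y, oplus x y = oplus y x) /\
  (forall x y z, oplus (oplus one x) (oplus y (oplus one z))
                 = oplus (oplus (oplus one x) y) (oplus one z)) /\
  (forall x, oplus (oplus x one) one = one) /\
  (forall x y, oplus (oplus x y) zero = oplus x y) /\
  (forall x, oplus (pl x) zero = pl (oplus x zero) /\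
             pl (oplus x zero) = oplus one (oplus (opp one) x)) /\
  (forall x, oplus (mi x) zero = mi (oplus x zero) /\
             mi (oplus x zero) = oplus (opp one) (oplus one x)) /\
  (forall x y, oplus x y = oplus (oplus (pl x) (pl y)) (oplus (mi x) (mi y))) /\
  zero = opp zero /\
  (forall x, oplus x (opp x) = zero) /\
  (forall x y, opp (oplus x y) = oplus (opp x) (opp y)) /\
  (forall x, opp (opp x) = x) /\
  (forall x y, pl (oplus (opp x) (oplus x y))
               = oplus (opp (pl x)) (oplus (pl x) (pl y))) /\
  (forall x y, join x y = join y x) /\
  (forall x y z, join x (join y z) = join (join x y) z) /\
  (forall x y z, oplus x (join y z) = join (oplus x y) (oplus x z)).

Definition strong_quasi_MV_star {A : Type} (oplus : A -> A -> A) (opp : A -> A)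
  (pl mi : A -> A) (zero one : A) : Prop :=
  quasi_MV_star oplus opp pl mi zero one /\
  (forall x, pl x = oplus (pl x) zero) /\
  (forall x, mi x = oplus (mi x) zero).

(* The translation g(S): x (+) y := ~x -> y, -x := ~x, 0 := x -> x
   (independent of x in a quasi-Wajsberg* algebra; we take x := 1). *)
Definition g_oplus {W : Type} (imp : W -> W -> W) (neg : W -> W) (x y : W) : W :=
  imp (neg x) y.
Definition g_zero {W : Type} (imp : W -> W -> W) (one : W) : W := imp one one.

(* Main.v *)
Require Import Defs.

Theorem proposition3p5 (S : Type) (imp : S -> S -> S) (neg : S -> S)
  (pl mi : S -> S) (one : S) :
  strong_quasi_wajsberg_star imp neg pl mi one ->
  strong_quasi_MV_star (g_oplus imp neg) neg pl mi (g_zero imp one) one.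
Proof.
  intros [[A1 [A2 [A3 [A4 [A5 [A6 [W6 [A7 [NN [W9 [A11 [A12 A13]]]]]]]]]]]] [Sp Sm]].
  assert (Zn : neg (imp one one) = imp one one) by (rewrite A7; reflexivity).
  assert (XX : forall x, imp x x = imp one one).
  { intro x. assert (H1 : imp x x = imp (imp one one) (imp x x)) by (rewrite A4; reflexivity).
    assert (H2 : imp one one = neg (imp x x)).
    { rewrite H1. rewrite A7. rewrite A4. reflexivity. }
    assert (H3 : imp x x = neg (imp x x)) by (rewrite A7; reflexivity).
    rewrite H2. exact H3. }
  assert (Npl : forall x, neg (pl x) = mi (neg x)).
  { intro x. rewrite Sm, (proj1 (A6 (neg x))), (proj2 (A6 (neg x))).
    rewrite Sp, (proj1 (A5 x)), (proj2 (A5 x)).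
    rewrite A7. rewrite (A1 (neg x) (neg one)), !NN.
    rewrite (A1 (imp one x) (neg one)), NN, A7. reflexivity. }
  assert (Nmi : forall x, neg (mi x) = pl (neg x)).
  { intro x. rewrite <- (NN (pl (neg x))), Npl, NN. reflexivity. }
  assert (J : forall x y, qmv_join (g_oplus imp neg) neg pl mi x y = qw_join imp neg pl mi x y).
  { intros x y. unfold qmv_join, qw_join, g_oplus; cbv beta. rewrite !NN, A7, Npl.
    f_equal. rewrite (A1 (mi (imp (mi y) (mi x))) (mi x)), !Nmi, A7. reflexivity. }
  assert (C : forall a b, imp (neg a) b = imp (neg b) a).
  { intros a b. rewrite A1, NN. reflexivity. }
  assert (K : forall x y z, imp (imp x (neg one)) (imp (imp y (neg one)) z)
     = neg (imp (imp (neg x) one) (imp (imp (neg y) one) (neg z)))).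
  { intros x y z. rewrite A7.
    rewrite (A1 (imp (imp (neg y) one) (neg z)) (imp (neg x) one)).
    rewrite (A7 (neg x) one), (A7 (imp (neg y) one) (neg z)).
    rewrite (A1 one (neg x)), NN.
    rewrite (A1 (neg z) (imp (neg y) one)), NN, A7.
    rewrite (A1 one (neg y)), NN. reflexivity. }
  assert (Q : forall x y z, imp (neg (imp (neg one) x)) (imp (neg (imp (neg one) y)) z)
     = imp (neg (imp (neg one) y)) (imp (neg (imp (neg one) x)) z)).
  { intros x y z. rewrite !A7. rewrite K, A2, <- K. reflexivity. }
  unfold strong_quasi_MV_star, quasi_MV_star, g_zero. cbv zeta.
  repeat split; intros; rewrite ?J; unfold g_oplus in *.
  - apply C.
  - rewrite (C (imp (neg (imp (neg one) x)) y) (imp (neg one) z)).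
    rewrite (Q z x y). rewrite (C (imp (neg one) z) y). reflexivity.
  - rewrite A7. apply A3.
  - rewrite (C (imp (neg x) y) (imp one one)), Zn, A4. reflexivity.
  - rewrite (C (pl x) (imp one one)), Zn, (C x (imp one one)), Zn. apply (proj1 (A5 x)).
  - rewrite (C x (imp one one)), Zn, (proj2 (A5 x)).
    rewrite NN, (A1 (imp x one) one), A7. reflexivity.
  - rewrite (C (mi x) (imp one one)), Zn, (C x (imp one one)), Zn. apply (proj1 (A6 x)).
  - rewrite (C x (imp one one)), Zn, (proj2 (A6 x)).
    rewrite (A1 (imp x (neg one)) (neg one)), A7. reflexivity.
  - rewrite (W6 (neg x) y), A7, Npl, Nmi. reflexivity.
  - symmetry; exact Zn.
  - apply XX.
  - rewrite A7, NN, (A1 x (neg y)), NN. reflexivity.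
  - apply NN.
  - rewrite !NN. apply W9.
  - apply A11.
  - apply A12.
  - apply A13.
  - rewrite (C (pl x) (imp one one)), Zn. apply Sp.
  - rewrite (C (mi x) (imp one one)), Zn. apply Sm.
Qed.
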